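(* Let $f_1,h_1$ be arbitrary smooth functions of one variable and $f_0,h_0$ arbitrary constants. For the equation $m_t+f(u,u_x)m+(g(u,u_x)m)_x=0$, $m=u-u_{xx}$, with $$f(u,u_x)=u_xf_1(u^2-u_x^2)+\frac{f_0u}{u^2-u_x^2},\qquad g(u,u_x)=uf_1(u^2-u_x^2)+h_1(u^2-u_x^2)+\frac{f_0u^2+h_0u}{u_x(u^2-u_x^2)},$$ both a local conservation law for momentum, $D_t u+D_x\Phi_1=0$, and a local conservation law for the $H^1$ density, $D_t(u_x^2+u^2)+D_x\Phi_2=0$, hold on all locally smooth solutions (for suitable fluxes $\Phi_1,\Phi_2$ depending on $x,u,u_x,m,u_t,u_{tx}$).
   Context: $D_t$, $D_x$ denote total derivatives; a local conservation law holds on solutions, i.e. after eliminating $m_t$ via $m_t=-f(u,u_x)m-(g(u,u_x)m)_x$. The expressions are considered on open sets where they are defined. *)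

(* Defs.v *)
From Stdlib Require Import Reals List.
From Coquelicot Require Import Coquelicot.
Open Scope R_scope.

(* Functions of (t, x) are curried: u t x. *)

Definition pt (u : R -> R -> R) : R -> R -> R :=
  fun t x => Derive (fun s => u s x) t.
Definition px (u : R -> R -> R) : R -> R -> R :=
  fun t x => Derive (fun y => u t y) x.

Fixpoint pder (w : list bool) (u : R -> R -> R) : R -> R -> R :=
  match w with
  | nil => u
  | cons b w' => if b then pt (pder w' u) else px (pder w' u)
  end.

Definition smooth_on (U : R * R -> Prop) (u : R -> R -> R) : Prop :=
  forall (w : list bool) (p : R * R), U p ->
    ex_derive (fun s => pder w u s (snd p)) (fst p) /\
    ex_derive (fun y => pder w u (fst p) y) (snd p) /\
    continuous (fun q : R * R => pder w u (fst q) (snd q)) p.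

Definition smooth1 (f : R -> R) : Prop :=
  forall (n : nat) (x : R), ex_derive (Derive_n f n) x.

Definition mom (u : R -> R -> R) : R -> R -> R :=
  fun t x => u t x - px (px u) t x.

(* f(u, u_x) and g(u, u_x) with a = u, b = u_x *)
Definition fcoef (f1 : R -> R) (f0 : R) (a b : R) : R :=
  b * f1 (a ^ 2 - b ^ 2) + f0 * a / (a ^ 2 - b ^ 2).

Definition gcoef (f1 h1 : R -> R) (f0 h0 : R) (a b : R) : R :=
  a * f1 (a ^ 2 - b ^ 2) + h1 (a ^ 2 - b ^ 2)
  + (f0 * a ^ 2 + h0 * a) / (b * (a ^ 2 - b ^ 2)).

Definition solves_on (f1 h1 : R -> R) (f0 h0 : R)
    (U : R * R -> Prop) (u : R -> R -> R) : Prop :=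
  forall p : R * R, U p ->
    pt (mom u) (fst p) (snd p)
    + fcoef f1 f0 (u (fst p) (snd p)) (px u (fst p) (snd p)) * mom u (fst p) (snd p)
    + px (fun t x => gcoef f1 h1 f0 h0 (u t x) (px u t x) * mom u t x)
         (fst p) (snd p) = 0.

Definition defined_on (U : R * R -> Prop) (u : R -> R -> R) : Prop :=
  forall p : R * R, U p ->
    px u (fst p) (snd p) <> 0 /\
    (u (fst p) (snd p)) ^ 2 - (px u (fst p) (snd p)) ^ 2 <> 0.

Definition flux_along (Phi : R -> R -> R -> R -> R -> R -> R)
    (u : R -> R -> R) : R -> R -> R :=
  fun t x => Phi x (u t x) (px u t x) (mom u t x) (pt u t x) (px (pt u) t x).

Definition conserved_on (U : R * R -> Prop) (u : R -> R -> R)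
    (rho : R -> R -> R) (Phi : R -> R -> R -> R -> R -> R -> R) : Prop :=
  forall p : R * R, U p ->
    ex_derive (fun s => rho s (snd p)) (fst p) /\
    ex_derive (fun y => flux_along Phi u (fst p) y) (snd p) /\
    pt rho (fst p) (snd p) + px (flux_along Phi u) (fst p) (snd p) = 0.

(* Main.v *)
Require Import Defs.
From Stdlib Require Import Reals Lra List.
From Coquelicot Require Import Coquelicot.
Open Scope R_scope.
Import ListNotations.

Lemma sqpos x : x <> 0 -> 0 < x * (x * 1).
Proof. intro H. rewrite Rmult_1_r. apply (Rsqr_pos_lt x H). Qed.
Lemma key1 (f1 F1 A B E K : R -> R) (f0 y : R) :
  (forall z, is_derive F1 z (f1 z)) ->
  ex_derive A y -> ex_derive B y -> ex_derive E y -> ex_derive K y ->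
  A y - B y <> 0 -> A y + B y <> 0 ->
  is_derive (fun y => - E y + K y + f0 * (y + /4 * (ln ((A y - B y)^2) - ln ((A y + B y)^2))) + /2 * F1 (A y ^ 2 - B y ^ 2)) y
   (- Derive E y + Derive K y + f0 * (1 + /2 * ((Derive A y - Derive B y)/(A y - B y) - (Derive A y + Derive B y)/(A y + B y)))
    + f1 (A y ^ 2 - B y ^ 2) * (A y * Derive A y - B y * Derive B y)).
Proof.
  intros HF HA HB HE HK H1 H2.
  auto_derive.
  - repeat split; auto; try (apply sqpos; auto).
    eexists; apply HF.
  - replace (Derive (fun x : R => F1 x) (A y * (A y * 1) + - (B y * (B y * 1)))) with (f1 (A y ^ 2 - B y ^ 2)).
    + set (da := Derive (fun x => A x) y). set (db := Derive (fun x => B x) y). set (de := Derive (fun x => E x) y). set (dk := Derive (fun x => K x) y). change (Derive A y) with da. change (Derive B y) with db. change (Derive E y) with de. change (Derive K y) with dk. field. split; auto.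
    + symmetry. apply is_derive_unique. replace (A y * (A y * 1) + - (B y * (B y * 1))) with (A y ^ 2 - B y ^ 2) by ring. apply HF.
Qed.
Lemma key2 (h1 H1 A B E K : R -> R) (h0 y : R) :
  (forall z, is_derive H1 z (h1 z)) ->
  ex_derive A y -> ex_derive B y -> ex_derive E y -> ex_derive K y ->
  A y - B y <> 0 -> A y + B y <> 0 ->
  is_derive (fun y => 2 * (- (A y * E y) + A y * K y - /2 * H1 (A y ^ 2 - B y ^ 2) - h0 * y - h0 * /4 * (ln ((A y - B y)^2) - ln ((A y + B y)^2)))) y
   (2 * (- (Derive A y * E y + A y * Derive E y) + Derive A y * K y + A y * Derive K y
     - h1 (A y ^ 2 - B y ^ 2) * (A y * Derive A y - B y * Derive B y)
     - h0 - h0 * /2 * ((Derive A y - Derive B y)/(A y - B y) - (Derive A y + Derive B y)/(A y + B y)))).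
Proof.
  intros HF HA HB HE HK Hn1 Hn2.
  auto_derive.
  - repeat split; auto; try (apply sqpos; auto).
    eexists; apply HF.
  - replace (Derive (fun x : R => H1 x) (A y * (A y * 1) + - (B y * (B y * 1)))) with (h1 (A y ^ 2 - B y ^ 2)).
    + set (da := Derive (fun x => A x) y). set (db := Derive (fun x => B x) y). set (de := Derive (fun x => E x) y). set (dk := Derive (fun x => K x) y). change (Derive A y) with da. change (Derive B y) with db. change (Derive E y) with de. change (Derive K y) with dk. field. split; auto.
    + symmetry. apply is_derive_unique. replace (A y * (A y * 1) + - (B y * (B y * 1))) with (A y ^ 2 - B y ^ 2) by ring. apply HF.
Qed.
Lemma keyt (F G : R -> R) s : ex_derive F s -> ex_derive G s ->
  is_derive (fun s => F s ^ 2 + G s ^ 2) s (2 * F s * Derive F s + 2 * G s * Derive G s).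
Proof. intros. auto_derive. repeat split; auto. set (d1 := Derive (fun x => F x) s). set (d2 := Derive (fun x => G x) s). change (Derive F s) with d1. change (Derive G s) with d2. ring. Qed.
Lemma antider (f : R -> R) : (forall z, continuous f z) -> forall z, is_derive (fun z => RInt f 0 z) z (f z).
Proof.
  intros Hc z. apply (is_derive_RInt _ _ 0); [|apply Hc].
  apply filter_forall. intros b. apply RInt_correct. apply ex_RInt_continuous. intros; apply Hc.
Qed.

Lemma pder_px w u : pder w (px u) = pder (w ++ [false]) u.
Proof. induction w as [|b w IH]; simpl; auto. rewrite IH. reflexivity. Qed.

Lemma smooth_px U u : smooth_on U u -> smooth_on U (px u).
Proof. intros H w p Hp. rewrite pder_px. apply H; auto. Qed.

Lemma loc_of_open (U : R * R -> Prop) t x : open U -> U (t, x) ->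
  locally_2d (fun a b => U (a, b)) t x.
Proof.
  intros HU Hp. apply locally_2d_locally.
  apply (filter_imp U); [intros [a b]; auto | apply HU; auto].
Qed.

Lemma swap U u t x : open U -> smooth_on U u -> U (t, x) ->
  pt (px u) t x = px (pt u) t x.
Proof.
  intros HU Hs Hp. unfold pt, px. apply Schwarz.
  - apply (locally_2d_impl (fun a b => U (a, b))); [|apply loc_of_open; auto].
    apply locally_2d_forall. intros s y Hz.
    destruct (Hs [] (s, y) Hz) as [H1 [H2 _]].
    destruct (Hs [false] (s, y) Hz) as [H3 _].
    destruct (Hs [true] (s, y) Hz) as [_ [H4 _]].
    repeat split; [exact H1 | exact H2 | exact H3 | exact H4].
  - apply continuity_2d_pt_filterlim.
    exact (proj2 (proj2 (Hs [true; false] (t, x) Hp))).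
  - apply continuity_2d_pt_filterlim.
    exact (proj2 (proj2 (Hs [false; true] (t, x) Hp))).
Qed.

Lemma swap3 U u t x : open U -> smooth_on U u -> U (t, x) ->
  pt (px (px u)) t x = px (px (pt u)) t x.
Proof.
  intros HU Hs Hp.
  rewrite (swap U (px u) t x HU (smooth_px U u Hs) Hp).
  change (Derive (fun y => pt (px u) t y) x = Derive (fun y => px (pt u) t y) x).
  apply Derive_ext_loc.
  apply (filter_imp (fun y => U (t, y))).
  - intros y Hy. apply (swap U u t y HU Hs Hy).
  - apply (locally_2d_1d_const_x (fun a b => U (a, b))). apply loc_of_open; auto.
Qed.

Lemma exK f1 h1 f0 h0 (A B M : R -> R) y :
  (forall z, ex_derive f1 z) -> (forall z, ex_derive h1 z) ->
  ex_derive A y -> ex_derive B y -> ex_derive M y ->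
  B y <> 0 -> A y ^ 2 - B y ^ 2 <> 0 ->
  ex_derive (fun y => gcoef f1 h1 f0 h0 (A y) (B y) * M y) y.
Proof.
  intros Hf Hh HA HB HM Hb Hw. unfold gcoef.
  auto_derive. repeat split; auto.
Qed.

Lemma alg1 a b c P e' D f1w f0 :
  b <> 0 -> a ^ 2 - b ^ 2 <> 0 -> a - b <> 0 -> a + b <> 0 ->
  P - e' + (b * f1w + f0 * a / (a ^ 2 - b ^ 2)) * (a - c) + D = 0 ->
  P + (- e' + D + f0 * (1 + / 2 * ((b - c) / (a - b) - (b + c) / (a + b)))
       + f1w * (a * b - b * c)) = 0.
Proof.
  intros Hb Hw H1 H2 H.
  replace D with (- (P - e' + (b * f1w + f0 * a / (a ^ 2 - b ^ 2)) * (a - c))) by lra.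
  field. repeat split; auto.
Qed.

Lemma alg2 a b c P e e' D f1w h1w f0 h0 :
  b <> 0 -> a ^ 2 - b ^ 2 <> 0 -> a - b <> 0 -> a + b <> 0 ->
  P - e' + (b * f1w + f0 * a / (a ^ 2 - b ^ 2)) * (a - c) + D = 0 ->
  2 * b * e + 2 * a * P +
  2 * (- (b * e + a * e') + b * ((a * f1w + h1w + (f0 * a ^ 2 + h0 * a) / (b * (a ^ 2 - b ^ 2))) * (a - c))
       + a * D - h1w * (a * b - b * c)
       - h0 - h0 * / 2 * ((b - c) / (a - b) - (b + c) / (a + b))) = 0.
Proof.
  intros Hb Hw H1 H2 H.
  replace D with (- (P - e' + (b * f1w + f0 * a / (a ^ 2 - b ^ 2)) * (a - c))) by lra.
  field. repeat split; auto.
Qed.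

Definition Phi1 (f1 h1 : R -> R) (f0 h0 : R) : R -> R -> R -> R -> R -> R -> R :=
  fun x a b m ut utx => - utx + gcoef f1 h1 f0 h0 a b * m
    + f0 * (x + / 4 * (ln ((a - b) ^ 2) - ln ((a + b) ^ 2)))
    + / 2 * RInt f1 0 (a ^ 2 - b ^ 2).

Definition Phi2 (f1 h1 : R -> R) (f0 h0 : R) : R -> R -> R -> R -> R -> R -> R :=
  fun x a b m ut utx => 2 * (- (a * utx) + a * (gcoef f1 h1 f0 h0 a b * m)
    - / 2 * RInt h1 0 (a ^ 2 - b ^ 2) - h0 * x
    - h0 * / 4 * (ln ((a - b) ^ 2) - ln ((a + b) ^ 2))).

Lemma pt_mom U u t x : smooth_on U u -> U (t, x) ->
  pt (mom u) t x = pt u t x - pt (px (px u)) t x.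
Proof.
  intros Hs Hp. unfold pt, mom. apply Derive_minus.
  - exact (proj1 (Hs [] (t, x) Hp)).
  - exact (proj1 (Hs [false; false] (t, x) Hp)).
Qed.

Theorem corollary1 :
  forall (f1 h1 : R -> R) (f0 h0 : R),
    smooth1 f1 -> smooth1 h1 ->
    exists Phi1 Phi2 : R -> R -> R -> R -> R -> R -> R,
      forall (U : R * R -> Prop) (u : R -> R -> R),
        open U -> smooth_on U u -> defined_on U u ->
        solves_on f1 h1 f0 h0 U u ->
        conserved_on U u u Phi1 /\
        conserved_on U u (fun t x => (px u t x) ^ 2 + (u t x) ^ 2) Phi2.
Proof.
  intros f1 h1 f0 h0 Hf1 Hh1.
  assert (ef1 : forall z, ex_derive f1 z) by (intro z; exact (Hf1 0%nat z)).
  assert (eh1 : forall z, ex_derive h1 z) by (intro z; exact (Hh1 0%nat z)).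
  assert (cf1 : forall z, continuous f1 z) by (intro z; exact (ex_derive_continuous (K:=R_AbsRing) (V:=R_NormedModule) f1 z (ef1 z))).
  assert (ch1 : forall z, continuous h1 z) by (intro z; exact (ex_derive_continuous (K:=R_AbsRing) (V:=R_NormedModule) h1 z (eh1 z))).
  exists (Phi1 f1 h1 f0 h0), (Phi2 f1 h1 f0 h0).
  intros U u HU Hs Hd Hsol.
  split; intros [t x] Hp; cbn [fst snd].
  all: assert (hA : ex_derive (fun y => u t y) x) by exact (proj1 (proj2 (Hs [] (t, x) Hp))).
  all: assert (hB : ex_derive (fun y => px u t y) x) by exact (proj1 (proj2 (Hs [false] (t, x) Hp))).
  all: assert (hC : ex_derive (fun y => px (px u) t y) x) by exact (proj1 (proj2 (Hs [false; false] (t, x) Hp))).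
  all: assert (hE : ex_derive (fun y => px (pt u) t y) x) by exact (proj1 (proj2 (Hs [false; true] (t, x) Hp))).
  all: assert (hM : ex_derive (fun y => mom u t y) x) by (unfold mom; eapply ex_derive_ext; [|apply (ex_derive_minus (fun y => u t y) (fun y => px (px u) t y)); auto]; intro; reflexivity).
  all: destruct (Hd (t, x) Hp) as [nb nw]; cbn [fst snd] in nb, nw.
  all: assert (n1 : u t x - px u t x <> 0) by (intro H; apply nw; replace (u t x) with (px u t x) by lra; ring).
  all: assert (n2 : u t x + px u t x <> 0) by (intro H; apply nw; replace (u t x) with (- px u t x) by lra; ring).
  all: assert (hK : ex_derive (fun y => gcoef f1 h1 f0 h0 (u t y) (px u t y) * mom u t y) x)
         by (apply (exK f1 h1 f0 h0 (fun y => u t y) (fun y => px u t y) (fun y => mom u t y)); auto).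
  all: pose proof (Hsol (t, x) Hp) as Hs1; cbn [fst snd] in Hs1.
  all: rewrite (pt_mom U u t x Hs Hp), (swap3 U u t x HU Hs Hp) in Hs1.
  - pose proof (key1 f1 (fun z => RInt f1 0 z) (fun y => u t y) (fun y => px u t y)
                  (fun y => px (pt u) t y)
                  (fun y => gcoef f1 h1 f0 h0 (u t y) (px u t y) * mom u t y) f0 x
                  (antider f1 cf1) hA hB hE hK n1 n2) as D1.
    apply (is_derive_ext _ (fun y => flux_along (Phi1 f1 h1 f0 h0) u t y) _ _ (fun y => eq_refl)) in D1.
    split; [exact (proj1 (Hs [] (t, x) Hp))|].
    split; [eexists; exact D1|].
    match type of D1 with is_derive _ _ ?L =>
      replace (px (flux_along (Phi1 f1 h1 f0 h0) u) t x) with L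
        by (symmetry; apply is_derive_unique; exact D1) end.
    apply (alg1 (u t x) (px u t x) (px (px u) t x) (pt u t x) (px (px (pt u)) t x)
             (px (fun t x => gcoef f1 h1 f0 h0 (u t x) (px u t x) * mom u t x) t x)
             (f1 (u t x ^ 2 - px u t x ^ 2)) f0); auto.
  - pose proof (key2 h1 (fun z => RInt h1 0 z) (fun y => u t y) (fun y => px u t y)
                  (fun y => px (pt u) t y)
                  (fun y => gcoef f1 h1 f0 h0 (u t y) (px u t y) * mom u t y) h0 x
                  (antider h1 ch1) hA hB hE hK n1 n2) as D2.
    apply (is_derive_ext _ (fun y => flux_along (Phi2 f1 h1 f0 h0) u t y) _ _ (fun y => eq_refl)) in D2.
    pose proof (keyt (fun s => px u s x) (fun s => u s x) t
                  (proj1 (Hs [false] (t, x) Hp)) (proj1 (Hs [] (t, x) Hp))) as D3.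
    split; [eexists; exact D3|].
    split; [eexists; exact D2|].
    match type of D2 with is_derive _ _ ?L =>
      replace (px (flux_along (Phi2 f1 h1 f0 h0) u) t x) with L
        by (symmetry; apply is_derive_unique; exact D2) end.
    match type of D3 with is_derive _ _ ?L =>
      replace (pt (fun t x => px u t x ^ 2 + u t x ^ 2) t x) with L
        by (symmetry; apply is_derive_unique; exact D3) end.
    change (Derive (fun s => px u s x) t) with (pt (px u) t x).
    rewrite (swap U u t x HU Hs Hp).
    apply (alg2 (u t x) (px u t x) (px (px u) t x) (pt u t x) (px (pt u) t x) (px (px (pt u)) t x)
             (px (fun t x => gcoef f1 h1 f0 h0 (u t x) (px u t x) * mom u t x) t x)
             (f1 (u t x ^ 2 - px u t x ^ 2)) (h1 (u t x ^ 2 - px u t x ^ 2)) f0 h0); auto.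
Qed.
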